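(* Let $n\geq2$, $A\in\mathrm{SL}_n(\mathbb Z)$, $B=(b_{ij})\in M_n(\mathbb R)$ with $\exp(B)=A$, and $M=\Gamma\backslash G(B)$ as in the context. Let $g$ be a homogeneous metric on $M$ for which $(V_1,\dots,V_n,Y)$ is an orthonormal frame, where $V_1,\dots,V_n$ is a basis of the space of left-invariant vertical fields $\mathrm{span}(X_1,\dots,X_n)$, let $C$ be the matrix of the endomorphism $f:X\mapsto[Y,X]$ of $\mathrm{span}(X_1,\dots,X_n)$ in the basis $(V_1,\dots,V_n)$, and let $a$ be the supremum of the absolute value of the sectional curvature of $(M,g)$. There exist constants $\tau(n)>0$ and $\kappa(B)$ such that $$\tau^{-1}a\leq \operatorname{Tr}(C\,{}^tC)\leq\tau a+\kappa.$$
   Context: $G=G(B)$ is the image of $(x_1,\dots,x_n,y)\in\mathbb R^{n+1}\mapsto\begin{pmatrix}\exp(yB)&0&x\\0&1&y\\0&0&1\end{pmatrix}\in\mathrm{GL}_{n+2}(\mathbb R)$ (blocks of sizes $n,1,1$), $\Gamma$ is the image of $\mathbb Z^{n+1}$. $X_1,\dots,X_n,Y$ are the left-invariant fields on $G$ (descending to $M$) generated at the identity by $\partial/\partial x_i,\partial/\partial y$; they satisfy $[X_i,X_j]=0$, $[Y,X_i]=\sum_j b_{ji}X_j$, so $f$ has matrix $B$ in the basis $(X_i)$. A homogeneous metric is one induced by a left-invariant metric on $G$. *)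

(* Defs.v *)
From HB Require Import structures.
From mathcomp Require Import all_boot all_order all_algebra.
From mathcomp Require Import all_classical all_reals all_analysis.
Set Implicit Arguments. Unset Strict Implicit. Unset Printing Implicit Defensive.
Import Order.TTheory GRing.Theory Num.Theory.
Import numFieldNormedType.Exports.
Local Open Scope classical_set_scope.
Local Open Scope ring_scope.

Section SolvDefs.
Variable R : realType.

Definition expmx_is (n : nat) (B A : 'M[R]_n) : Prop :=
  forall i j, (fun N : nat => \sum_(k < N) (iter k (mulmx B) 1%:M) i j / (k`!)%:R)
                @ \oo --> A i j.

(** Standard inner product on coordinate column vectors (coordinates taken
    in an orthonormal frame). *)
Definition vdot (m : nat) (u v : 'cV[R]_m) : R := (u^T *m v) 0 0.

(** Lie bracket of the Lie algebra of G(B), in coordinates w.r.t. the frame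
    (V_1,...,V_n,Y): [V_i,V_j]=0, [Y,V_j] = sum_l C_lj V_l. A vector u is
    col_mx x s, meaning sum_i x_i V_i + s Y. *)
Definition solv_bracket (n : nat) (C : 'M[R]_n) (u v : 'cV[R]_(n + 1))
  : 'cV[R]_(n + 1) :=
  col_mx ((dsubmx u 0 0) *: (C *m usubmx v) - (dsubmx v 0 0) *: (C *m usubmx u))
         (0 : 'cV[R]_1).

(** Levi-Civita connection of the left-invariant metric making the coordinate
    frame orthonormal, on left-invariant fields, via the Koszul formula
    2<nabla_u v, w> = <[u,v],w> - <[v,w],u> + <[w,u],v>. *)
Definition lc_conn (m : nat) (br : 'cV[R]_m -> 'cV[R]_m -> 'cV[R]_m)
  (u v : 'cV[R]_m) : 'cV[R]_m :=
  \col_k (2^-1 * (vdot (br u v) (delta_mx k 0) - vdot (br v (delta_mx k 0)) u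
                  + vdot (br (delta_mx k 0) u) v)).

Definition curv (m : nat) (br : 'cV[R]_m -> 'cV[R]_m -> 'cV[R]_m)
  (u v w : 'cV[R]_m) : 'cV[R]_m :=
  lc_conn br u (lc_conn br v w) - lc_conn br v (lc_conn br u w)
  - lc_conn br (br u v) w.

Definition sec_curv (m : nat) (br : 'cV[R]_m -> 'cV[R]_m -> 'cV[R]_m)
  (u v : 'cV[R]_m) : R :=
  vdot (curv br u v v) u / (vdot u u * vdot v v - (vdot u v) ^+ 2).

Definition sup_abs_sec (m : nat) (br : 'cV[R]_m -> 'cV[R]_m -> 'cV[R]_m) : R :=
  sup [set x : R | exists u v : 'cV[R]_m,
         \rank (row_mx u v) = 2%N /\ x = `|sec_curv br u v|].

End SolvDefs.

(* Main.v *)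
Require Import Defs.
From HB Require Import structures.
From mathcomp Require Import all_boot all_order all_algebra.
From mathcomp Require Import all_classical all_reals all_analysis.
From mathcomp Require Import ring lra.
Import Order.TTheory GRing.Theory Num.Theory.
Local Open Scope ring_scope.
Set Implicit Arguments. Unset Strict Implicit. Unset Printing Implicit Defensive.


Lemma vdotE {R : realType} m (u v : 'cV[R]_m) : vdot u v = \sum_i u i 0 * v i 0.
Proof. by rewrite /vdot !mxE; apply: eq_bigr => i _; rewrite !mxE. Qed.

Lemma vdotC {R : realType} m (u v : 'cV[R]_m) : vdot u v = vdot v u.
Proof. by rewrite !vdotE; apply: eq_bigr => i _; rewrite mulrC. Qed.

Lemma vdotDl {R : realType} m a (u v w : 'cV[R]_m) : vdot (a *: u + v) w = a * vdot u w + vdot v w.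
Proof.
rewrite !vdotE mulr_sumr -big_split; apply: eq_bigr => i _; by rewrite !mxE mulrDl mulrA.
Qed.

Lemma vdotDr {R : realType} m a (u v w : 'cV[R]_m) : vdot w (a *: u + v) = a * vdot w u + vdot w v.
Proof. by rewrite vdotC vdotDl !(vdotC w). Qed.

Lemma vdot0l {R : realType} m (w : 'cV[R]_m) : vdot 0 w = 0.
Proof. by rewrite vdotE big1 // => i _; rewrite mxE mul0r. Qed.

Lemma vdot0r {R : realType} m (w : 'cV[R]_m) : vdot w 0 = 0.
Proof. by rewrite vdotC vdot0l. Qed.

Lemma vdotNl {R : realType} m (u w : 'cV[R]_m) : vdot (- u) w = - vdot u w.
Proof. have := vdotDl (-1) u 0 w; rewrite addr0 vdot0l addr0 scaleN1r => ->; ring. Qed.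

Lemma vdotBl {R : realType} m (u v w : 'cV[R]_m) : vdot (u - v) w = vdot u w - vdot v w.
Proof. by rewrite -[u]scale1r vdotDl vdotNl scale1r mul1r. Qed.

Lemma vdotDl1 {R : realType} m (u v w : 'cV[R]_m) : vdot (u + v) w = vdot u w + vdot v w.
Proof. by rewrite -[u]scale1r vdotDl scale1r mul1r. Qed.

Lemma vdotZl {R : realType} m a (u w : 'cV[R]_m) : vdot (a *: u) w = a * vdot u w.
Proof. by rewrite -[a *: u]addr0 vdotDl vdot0l addr0. Qed.

Lemma vdot_delta {R : realType} m (p : 'cV[R]_m) k : vdot p (delta_mx k 0) = p k 0.
Proof.
rewrite vdotE (bigD1 k) //= big1 ?addr0; first by rewrite mxE !eqxx mulr1.
by move=> i /negbTE ik; rewrite mxE ik mulr0.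
Qed.

Lemma vdot_ge0 {R : realType} m (u : 'cV[R]_m) : 0 <= vdot u u.
Proof. by rewrite vdotE; apply: sumr_ge0 => i _; rewrite -expr2 sqr_ge0. Qed.

Lemma vdot_col {R : realType} m1 m2 (a c : 'cV[R]_m1) (b d : 'cV[R]_m2) :
  vdot (col_mx a b) (col_mx c d) = vdot a c + vdot b d.
Proof.
rewrite !vdotE big_split_ord /=; congr (_ + _); apply: eq_bigr => i _;
by rewrite ?col_mxEu ?col_mxEd.
Qed.

Lemma vdot_eq {R : realType} m (p q : 'cV[R]_m) : (forall w, vdot p w = vdot q w) -> p = q.
Proof.
move=> h; apply/matrixP => i j; rewrite (ord1 j) -!vdot_delta; exact: h.
Qed.

Lemma CS {R : realType} m (a b : 'cV[R]_m) : vdot a b ^+ 2 <= vdot a a * vdot b b.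
Proof.
have key : forall x y : 'cV[R]_m, 0 <= vdot y y * (vdot x x * vdot y y - vdot x y ^+ 2).
  move=> x y; have := vdot_ge0 (vdot y y *: x - vdot x y *: y).
  rewrite vdotBl !vdotZl !(vdotC _ (_ - _)) !vdotBl !vdotZl (vdotC y x).
  move=> h; suff -> : vdot y y * (vdot x x * vdot y y - vdot x y ^+ 2) =
     vdot y y * (vdot y y * vdot x x - vdot x y * vdot x y) -
     vdot x y * (vdot y y * vdot x y - vdot x y * vdot y y) by [].
  ring.
have ha := vdot_ge0 a; have hb := vdot_ge0 b.
have k1 := key a b; have k2 := key b a; rewrite (vdotC b a) in k2.
have e1 := vdot_ge0 (a - b); have e2 := vdot_ge0 (a + b).
rewrite !vdotBl !(vdotC _ (_ - _)) !vdotBl in e1.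
rewrite !vdotDl1 !(vdotC _ (_ + _)) !vdotDl1 in e2.
rewrite (vdotC b a) in e1 e2.
move: ha hb k1 k2 e1 e2; set A := vdot a a; set B := vdot b b; set X := vdot a b.
move=> ha hb k1 k2 e1 e2.
have [Bp|] := ltrP 0 B.
  by rewrite -subr_ge0; move: k1; rewrite (pmulr_rge0 _ Bp); exact: id.
move=> B0.
have [Ap|] := ltrP 0 A.
  rewrite -subr_ge0; move: k2; rewrite (pmulr_rge0 _ Ap) (mulrC B A); exact: id.
move=> A0; have eA : A = 0 by apply/eqP; rewrite eq_le A0 ha.
have eB : B = 0 by apply/eqP; rewrite eq_le B0 hb.
rewrite eA eB in e1 e2 *. have -> : X = 0 by lra. by rewrite expr0n mulr0.
Qed.

Lemma sq_abs_le {R : realType} (x y : R) : 0 <= y -> x ^+ 2 <= y ^+ 2 -> `|x| <= y.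
Proof.
move=> y0 h; rewrite -ler_sqr ?inE ?normr_ge0 //.
by rewrite real_normK ?num_real.
Qed.


Definition goodbr {R : realType} m (br : 'cV[R]_m -> 'cV[R]_m -> 'cV[R]_m) : Prop :=
  (forall a u v w, br (a *: u + v) w = a *: br u w + br v w) /\
  (forall u v, br v u = - br u v).

Lemma vdotDr1 {R : realType} m (u v w : 'cV[R]_m) : vdot w (u + v) = vdot w u + vdot w v.
Proof. by rewrite vdotC vdotDl1 !(vdotC w). Qed.
Lemma vdotZr {R : realType} m a (u w : 'cV[R]_m) : vdot w (a *: u) = a * vdot w u.
Proof. by rewrite vdotC vdotZl vdotC. Qed.
Lemma vdotNr {R : realType} m (u w : 'cV[R]_m) : vdot w (- u) = - vdot w u.
Proof. by rewrite vdotC vdotNl vdotC. Qed.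
Lemma vdotBr {R : realType} m (u v w : 'cV[R]_m) : vdot w (u - v) = vdot w u - vdot w v.
Proof. by rewrite vdotC vdotBl !(vdotC w). Qed.

Lemma brR {R : realType} m (br : 'cV[R]_m -> 'cV[R]_m -> 'cV[R]_m) (hb : goodbr br) a u v w :
  br w (a *: u + v) = a *: br w u + br w v.
Proof.
case: hb => hL hA; rewrite hA hL (hA w u) (hA w v).
by rewrite scalerN opprD !opprK.
Qed.

Lemma dbl0 (V : zmodType) (x : V) : x = x + x -> x = 0.
Proof. by move=> h; have := congr1 (fun y => y - x) h; rewrite subrr addrK. Qed.

Lemma br0l {R : realType} m (br : 'cV[R]_m -> 'cV[R]_m -> 'cV[R]_m) (hb : goodbr br) w :
  br 0 w = 0.
Proof.
case: hb => hL _; have := hL 1 0 0 w; rewrite !scale1r addr0; exact: dbl0.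
Qed.

Lemma brself {R : realType} m (br : 'cV[R]_m -> 'cV[R]_m -> 'cV[R]_m) (hb : goodbr br) u :
  br u u = 0.
Proof.
case: hb => _ hA; have := hA u u => /eqP; rewrite -subr_eq0 opprK => /eqP h.
apply/matrixP => i j; move/matrixP: h => /(_ i j); rewrite !mxE => h; lra.
Qed.

Lemma lin_expand {R : realType} m (g : 'cV[R]_m -> R)
  (hg : forall a u v, g (a *: u + v) = a * g u + g v) w :
  g w = \sum_k w k 0 * g (delta_mx k 0).
Proof.
have g0 : g 0 = 0.
  by have := hg 1 0 0; rewrite scale1r addr0 mul1r; exact: dbl0.
have ew : w = \sum_k w k 0 *: delta_mx k 0.
  rewrite {1}(matrix_sum_delta w); apply: eq_bigr => k _; by rewrite big_ord1.
rewrite {1}ew; elim/big_rec2: _ => [|k y1 y2 _ <-]; first by [].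
by rewrite hg.
Qed.

Lemma koszul {R : realType} m (br : 'cV[R]_m -> 'cV[R]_m -> 'cV[R]_m) (hb : goodbr br) u v w :
  vdot (lc_conn br u v) w =
  2^-1 * (vdot (br u v) w - vdot (br v w) u + vdot (br w u) v).
Proof.
case: (hb) => hL hA.
set F := fun w => vdot (br u v) w - vdot (br v w) u + vdot (br w u) v.
have hF : forall a x y, F (a *: x + y) = a * F x + F y.
  move=> a x y; rewrite /F vdotDr brR // hL !vdotDl; ring.
rewrite -/(F w) (lin_expand hF w) mulr_sumr vdotE; apply: eq_bigr => k _.
by rewrite mxE /F; ring.
Qed.

Lemma lc_metric {R : realType} m (br : 'cV[R]_m -> 'cV[R]_m -> 'cV[R]_m) (hb : goodbr br) u v w :
  vdot (lc_conn br u v) w = - vdot v (lc_conn br u w).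
Proof.
rewrite (vdotC v) !koszul //; case: hb => _ hA.
rewrite (hA u w) (hA w v) (hA u v) !vdotNl; ring.
Qed.

Lemma lcL1 {R : realType} m (br : 'cV[R]_m -> 'cV[R]_m -> 'cV[R]_m) (hb : goodbr br) a u u' v :
  lc_conn br (a *: u + u') v = a *: lc_conn br u v + lc_conn br u' v.
Proof.
apply: vdot_eq => w; rewrite vdotDl !koszul //.
case: (hb) => hL hA.
rewrite hL brR // !vdotDl !vdotDr; ring.
Qed.

Lemma lcL2 {R : realType} m (br : 'cV[R]_m -> 'cV[R]_m -> 'cV[R]_m) (hb : goodbr br) a u v v' :
  lc_conn br u (a *: v + v') = a *: lc_conn br u v + lc_conn br u v'.
Proof.
apply: vdot_eq => w; rewrite vdotDl !koszul //.
case: (hb) => hL hA.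
rewrite hL brR // !vdotDl !vdotDr; ring.
Qed.

Lemma modid2 {R : realType} m n a (X Y Z W U T : 'M[R]_(m, n)) :
  (a *: X + Y) - (a *: Z + W) - (a *: U + T) = a *: (X - Z - U) + (Y - W - T).
Proof. apply/matrixP => i j; rewrite !mxE; ring. Qed.

Lemma modid3 {R : realType} m n a (X Y Z W U T : 'M[R]_(m, n)) :
  (a *: X + Y) - (a *: Z + W) - (a *: U + T) = a *: (X - Z - U) + (Y - W - T).
Proof. apply/matrixP => i j; rewrite !mxE; ring. Qed.

Lemma lc0 {R : realType} m (br : 'cV[R]_m -> 'cV[R]_m -> 'cV[R]_m) (hb : goodbr br) w :
  lc_conn br 0 w = 0.
Proof. by have := lcL1 hb 1 0 0 w; rewrite !scale1r addr0; exact: dbl0. Qed.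

Lemma curv_self {R : realType} m (br : 'cV[R]_m -> 'cV[R]_m -> 'cV[R]_m) (hb : goodbr br) u w :
  curv br u u w = 0.
Proof. by rewrite /curv brself // lc0 // subrr subr0. Qed.

Lemma curvL2 {R : realType} m (br : 'cV[R]_m -> 'cV[R]_m -> 'cV[R]_m) (hb : goodbr br) a u v v' w :
  curv br u (a *: v + v') w = a *: curv br u v w + curv br u v' w.
Proof.
rewrite /curv brR // !lcL1 // lcL2 //; exact: modid2.
Qed.

Lemma curvL3 {R : realType} m (br : 'cV[R]_m -> 'cV[R]_m -> 'cV[R]_m) (hb : goodbr br) a u v w w' :
  curv br u v (a *: w + w') = a *: curv br u v w + curv br u v w'.
Proof.
rewrite /curv !lcL2 //; exact: modid2.
Qed.

Lemma curv0 {R : realType} m (br : 'cV[R]_m -> 'cV[R]_m -> 'cV[R]_m) (hb : goodbr br) u w :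
  curv br u 0 w = 0.
Proof. by have := curvL2 hb 1 u 0 0 w; rewrite !scale1r addr0; exact: dbl0. Qed.

Lemma curvZ2 {R : realType} m (br : 'cV[R]_m -> 'cV[R]_m -> 'cV[R]_m) (hb : goodbr br) a u v w :
  curv br u (a *: v) w = a *: curv br u v w.
Proof. by have := curvL2 hb a u v 0 w; rewrite !addr0 curv0 // addr0. Qed.

Lemma curv_skew {R : realType} m (br : 'cV[R]_m -> 'cV[R]_m -> 'cV[R]_m) (hb : goodbr br) u v w :
  vdot (curv br u v w) w = 0.
Proof.
have h : vdot (lc_conn br (br u v) w) w = 0.
  have e := lc_metric hb (br u v) w w; rewrite (vdotC w) in e; lra.
rewrite /curv !vdotBl h (lc_metric hb u (lc_conn br v w) w) (lc_metric hb v (lc_conn br u w) w) (vdotC (lc_conn br v w)); lra.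
Qed.

Lemma num_formula {R : realType} m (br : 'cV[R]_m -> 'cV[R]_m -> 'cV[R]_m) (hb : goodbr br) u v :
  vdot (curv br u v v) u = - vdot (lc_conn br v v) (lc_conn br u u)
     + vdot (lc_conn br u v) (lc_conn br v u) - vdot (lc_conn br (br u v) v) u.
Proof. rewrite /curv !vdotBl (lc_metric hb u (lc_conn br v v) u) (lc_metric hb v (lc_conn br u v) u); lra. Qed.

Lemma vdot_dd {R : realType} m (k : 'I_m) : vdot (delta_mx k 0 : 'cV[R]_m) (delta_mx k 0) = 1.
Proof. by rewrite vdot_delta mxE !eqxx. Qed.

Lemma sq3 {R : realType} (p q r : R) : (2^-1 * (p - q + r)) * (2^-1 * (p - q + r)) <= p ^+ 2 + q ^+ 2 + r ^+ 2.
Proof.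
have h : p ^+ 2 + q ^+ 2 + r ^+ 2 - (2^-1 * (p - q + r)) * (2^-1 * (p - q + r)) =
  4^-1 * (p ^+ 2 + q ^+ 2 + r ^+ 2 + (p + q) ^+ 2 + (q + r) ^+ 2 + (p - r) ^+ 2).
  by field.
rewrite -subr_ge0 h; apply: mulr_ge0; first by rewrite invr_ge0.
by rewrite !addr_ge0 // sqr_ge0.
Qed.

Lemma lc_bound {R : realType} m (br : 'cV[R]_m -> 'cV[R]_m -> 'cV[R]_m) (hb : goodbr br)
  (beta : R) (hbeta0 : 0 <= beta)
  (hB : forall u v, vdot (br u v) (br u v) <= beta * vdot u u * vdot v v) u v :
  vdot (lc_conn br u v) (lc_conn br u v) <= (1 + 2 * m%:R) * beta * (vdot u u * vdot v v).
Proof.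
rewrite {1}vdotE.
have step : forall k : 'I_m, lc_conn br u v k 0 * lc_conn br u v k 0 <=
   (vdot (br u v) (delta_mx k 0)) ^+ 2 + (vdot (br v (delta_mx k 0)) u) ^+ 2
   + (vdot (br (delta_mx k 0) u) v) ^+ 2.
  by move=> k; rewrite mxE; apply: sq3.
apply: le_trans (ler_sum _ (fun k _ => step k)) _.
rewrite !big_split /=.
have e1 : \sum_(k < m) vdot (br u v) (delta_mx k 0) ^+ 2 = vdot (br u v) (br u v).
  by rewrite vdotE; apply: eq_bigr => k _; rewrite vdot_delta expr2.
have e2 : \sum_(k < m) vdot (br v (delta_mx k 0)) u ^+ 2 <= \sum_(k < m) (beta * vdot v v * vdot u u).
  apply: ler_sum => k _; apply: le_trans (CS _ _) _.
  apply: ler_wpM2r; first exact: vdot_ge0.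
  by apply: le_trans (hB _ _) _; rewrite vdot_dd mulr1.
have e3 : \sum_(k < m) vdot (br (delta_mx k 0) u) v ^+ 2 <= \sum_(k < m) (beta * vdot u u * vdot v v).
  apply: ler_sum => k _; apply: le_trans (CS _ _) _.
  apply: ler_wpM2r; first exact: vdot_ge0.
  by apply: le_trans (hB _ _) _; rewrite vdot_dd mulr1.
rewrite sumr_const card_ord -mulr_natr in e2.
rewrite sumr_const card_ord -mulr_natr in e3.
rewrite e1.
have hb1 := hB u v.
have -> : (1 + 2 * m%:R) * beta * (vdot u u * vdot v v) =
  beta * vdot u u * vdot v v + beta * vdot v v * vdot u u * m%:R + beta * vdot u u * vdot v v * m%:R by ring.
by apply: lerD; first apply: lerD.
Qed.

Lemma le_eq_r {R : realType} (x y z : R) : x <= y -> y = z -> x <= z.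
Proof. by move=> h <-. Qed.

Lemma num_bound {R : realType} m (br : 'cV[R]_m -> 'cV[R]_m -> 'cV[R]_m) (hb : goodbr br)
  (beta : R) (hbeta0 : 0 <= beta)
  (hB : forall u v, vdot (br u v) (br u v) <= beta * vdot u u * vdot v v) u v :
  `|vdot (curv br u v v) u| <= 3 * ((1 + 2 * m%:R) * beta) * (vdot u u * vdot v v).
Proof.
rewrite num_formula //.
set c := (1 + 2 * m%:R) * beta.
have hc : 0 <= c by rewrite /c mulr_ge0 // addr_ge0 // mulr_ge0.
have hbc : beta <= c.
  have -> : c = beta + 2 * m%:R * beta by rewrite /c; ring.
  by rewrite lerDl mulr_ge0 // mulr_ge0.
have hu := vdot_ge0 u; have hv := vdot_ge0 v.
have L := lc_bound hb hbeta0 hB.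
have nl := fun x y => vdot_ge0 (lc_conn br x y).
have huv : 0 <= c * (vdot u u * vdot v v) by rewrite mulr_ge0 // mulr_ge0.
have t1 : `|vdot (lc_conn br v v) (lc_conn br u u)| <= c * (vdot u u * vdot v v).
  apply: sq_abs_le => //; apply: le_trans (CS _ _) _.
  apply: le_eq_r; first exact: (ler_pM (nl _ _) (nl _ _) (L v v) (L u u)).
  rewrite /c; ring.
have t2 : `|vdot (lc_conn br u v) (lc_conn br v u)| <= c * (vdot u u * vdot v v).
  apply: sq_abs_le => //; apply: le_trans (CS _ _) _.
  apply: le_eq_r; first exact: (ler_pM (nl _ _) (nl _ _) (L u v) (L v u)).
  rewrite /c; ring.
have t3 : `|vdot (lc_conn br (br u v) v) u| <= c * (vdot u u * vdot v v).
  apply: sq_abs_le => //; apply: le_trans (CS _ _) _.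
  apply: le_trans; first exact: (ler_wpM2r hu (L (br u v) v)).
  have hw := hB u v.
  have : c * (vdot (br u v) (br u v) * vdot v v) * vdot u u <=
         c * (beta * vdot u u * vdot v v * vdot v v) * vdot u u.
    apply: ler_wpM2r => //; apply: ler_wpM2l => //; exact: ler_wpM2r.
  move=> h; apply: le_trans h _.
  have -> : c * (beta * vdot u u * vdot v v * vdot v v) * vdot u u =
     beta * (c * (vdot u u * vdot v v) ^+ 2) by ring.
  have -> : (c * (vdot u u * vdot v v)) ^+ 2 = c * (c * (vdot u u * vdot v v) ^+ 2) by ring.
  by apply: ler_wpM2r => //; rewrite mulr_ge0 // sqr_ge0.
set X := vdot (lc_conn br v v) (lc_conn br u u) in t1 *.
set Y := vdot (lc_conn br u v) (lc_conn br v u) in t2 *.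
set Z := vdot (lc_conn br (br u v) v) u in t3 *.
apply: le_trans (_ : `|X| + `|Y| + `|Z| <= _).
  apply: le_trans (ler_normB _ _) _; rewrite lerD2r.
  by apply: le_trans (ler_normD _ _) _; rewrite normrN.
apply: le_eq_r; first by apply: lerD; first apply: lerD; eassumption.
ring.
Qed.

Lemma curvZ3 {R : realType} m (br : 'cV[R]_m -> 'cV[R]_m -> 'cV[R]_m) (hb : goodbr br) a u v w :
  curv br u v (a *: w) = a *: curv br u v w.
Proof.
have c0 : curv br u v 0 = 0.
  by have := curvL3 hb 1 u v 0 0; rewrite !scale1r addr0; exact: dbl0.
by have := curvL3 hb a u v w 0; rewrite !addr0 c0 addr0.
Qed.

Lemma gram_bound {R : realType} m (br : 'cV[R]_m -> 'cV[R]_m -> 'cV[R]_m) (hb : goodbr br)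
  (beta : R) (hbeta0 : 0 <= beta)
  (hB : forall u v, vdot (br u v) (br u v) <= beta * vdot u u * vdot v v) u v :
  `|vdot (curv br u v v) u| <= 3 * ((1 + 2 * m%:R) * beta) *
      (vdot u u * vdot v v - vdot u v ^+ 2).
Proof.
set c := 3 * ((1 + 2 * m%:R) * beta).
have hc : 0 <= c by rewrite /c mulr_ge0 // mulr_ge0 // addr_ge0 // mulr_ge0.
have G0 : 0 <= vdot u u * vdot v v - vdot u v ^+ 2 by rewrite subr_ge0 CS.
have hu := vdot_ge0 u.
have [Nup|] := ltrP 0 (vdot u u); last first.
  move=> hu0; have Nu0 : vdot u u = 0 by apply/eqP; rewrite eq_le hu0 hu.
  have h := num_bound hb hbeta0 hB u v; rewrite Nu0 mul0r mulr0 in h.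
  by apply: le_trans h _; rewrite mulr_ge0.
set X := vdot u v.
pose v' := vdot u u *: v + (- X) *: u.
have e1 : vdot (curv br u v' v') u = vdot u u ^+ 2 * vdot (curv br u v v) u.
  rewrite /v' curvL2 // curvZ2 // curv_self // scaler0 addr0.
  rewrite curvL3 // curvZ3 // vdotZl vdotDl vdotZl curv_skew //; ring.
have e2 : vdot v' v' = vdot u u * (vdot u u * vdot v v - X ^+ 2).
  rewrite /v' !vdotDl !vdotDr !vdotZl !vdotZr (vdotC v u) -/X; ring.
have := num_bound hb hbeta0 hB u v'; rewrite e1 e2 normrM ger0_norm ?sqr_ge0 // => h.
have Nu2 : 0 < vdot u u ^+ 2 by rewrite exprn_gt0.
rewrite -(ler_pM2l Nu2); apply: le_trans h _.
apply: le_eq_r (le_refl _) _; rewrite /c; ring.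
Qed.

Lemma sec_bound {R : realType} m (br : 'cV[R]_m -> 'cV[R]_m -> 'cV[R]_m) (hb : goodbr br)
  (beta : R) (hbeta0 : 0 <= beta)
  (hB : forall u v, vdot (br u v) (br u v) <= beta * vdot u u * vdot v v) u v :
  `|sec_curv br u v| <= 3 * ((1 + 2 * m%:R) * beta).
Proof.
have hc : 0 <= 3 * ((1 + 2 * m%:R) * beta) by rewrite mulr_ge0 // mulr_ge0 // addr_ge0 // mulr_ge0.
rewrite /sec_curv; set G := _ - _.
have G0 : 0 <= G by rewrite subr_ge0 CS.
have [Gp|] := ltrP 0 G; last first.
  move=> hG; have -> : G = 0 by apply/eqP; rewrite eq_le hG G0.
  by rewrite invr0 mulr0 normr0.
rewrite normrM normfV (ger0_norm G0) ler_pdivrMr //.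
exact: gram_bound.
Qed.

Lemma usubL {R : realType} n a (u v : 'cV[R]_(n + 1)) :
  usubmx (a *: u + v) = a *: usubmx u + usubmx v.
Proof. by apply/matrixP => i j; rewrite !mxE. Qed.

Lemma dsubL {R : realType} n a (u v : 'cV[R]_(n + 1)) :
  dsubmx (a *: u + v) 0 0 = a * dsubmx u 0 0 + dsubmx v 0 0.
Proof. by rewrite !mxE. Qed.

Lemma solv_good {R : realType} n (C : 'M[R]_n) : goodbr (solv_bracket C).
Proof.
split.
- move=> a u v w; rewrite /solv_bracket usubL dsubL scale_col_mx add_col_mx scaler0 addr0.
  congr col_mx; rewrite mulmxDr -scalemxAr.
  set P := C *m usubmx u; set Q := C *m usubmx v; set W := C *m usubmx w.
  by apply/matrixP => i j; rewrite !mxE; ring.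
- move=> u v; rewrite /solv_bracket opp_col_mx oppr0 opprB //.
Qed.

Lemma vdot_col0 {R : realType} n (p q : 'cV[R]_n) :
  vdot (col_mx p (0 : 'cV[R]_1)) (col_mx q 0) = vdot p q.
Proof. by rewrite vdot_col vdot0l addr0. Qed.

Lemma vdot11 {R : realType} (s t : R) : vdot (s%:M : 'cV[R]_1) t%:M = s * t.
Proof. by rewrite vdotE big_ord1 !mxE. Qed.

Lemma normCx {R : realType} n (C : 'M[R]_n) (x : 'cV[R]_n) :
  vdot (C *m x) (C *m x) <= \tr (C *m C^T) * vdot x x.
Proof.
have e : forall i, (C *m x) i 0 = vdot (row i C)^T x.
  by move=> i; rewrite vdotE mxE; apply: eq_bigr => j _; rewrite !mxE.
rewrite vdotE /mxtrace mulr_suml; apply: ler_sum => i _.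
rewrite e -expr2; apply: le_trans (CS _ _) _; apply: ler_wpM2r; first exact: vdot_ge0.
rewrite vdotE mxE; apply: le_eq_r (le_refl _) _; apply: eq_bigr => j _; rewrite !mxE //.
Qed.

Lemma normB2 {R : realType} n (p q : 'cV[R]_n) : vdot (p - q) (p - q) <= 2 * vdot p p + 2 * vdot q q.
Proof.
have := vdot_ge0 (p + q).
rewrite vdotBl !vdotBr vdotDl1 !vdotDr1 (vdotC q p); lra.
Qed.

Lemma vsplit {R : realType} n (u : 'cV[R]_(n + 1)) :
  vdot u u = vdot (usubmx u) (usubmx u) + dsubmx u 0 0 ^+ 2.
Proof. by rewrite -{1 2}(vsubmxK u) vdot_col {1 2}(mx11_scalar (dsubmx u)) vdot11 expr2. Qed.

Lemma solv_bound {R : realType} n (C : 'M[R]_n) u v :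
  vdot (solv_bracket C u v) (solv_bracket C u v) <=
  (4 * \tr (C *m C^T)) * vdot u u * vdot v v.
Proof.
rewrite /solv_bracket vdot_col0 (vsplit u) (vsplit v).
set x := usubmx u; set s := dsubmx u 0 0; set y := usubmx v; set t := dsubmx v 0 0.
set T := \tr (C *m C^T).
have hT : 0 <= T.
  by rewrite /T /mxtrace; apply: sumr_ge0 => i _; rewrite mxE; apply: sumr_ge0 => j _;
     rewrite mxE -expr2 sqr_ge0.
apply: le_trans (normB2 _ _) _.
rewrite !vdotZl !(vdotC _ (_ *: _)) !vdotZl.
have h1 := normCx C y; have h2 := normCx C x.
have hx := vdot_ge0 x; have hy := vdot_ge0 y.
have hCx := vdot_ge0 (C *m x); have hCy := vdot_ge0 (C *m y).
set X := vdot x x in h2 hx *; set Y := vdot y y in h1 hy *.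
set CX := vdot (C *m x) (C *m x) in h2 hCx *; set CY := vdot (C *m y) (C *m y) in h1 hCy *.
have hs := sqr_ge0 s; have ht := sqr_ge0 t.
have k1 : s * (s * CY) <= s ^+ 2 * (T * Y) by rewrite mulrA -expr2 ler_wpM2l.
have k2 : t * (t * CX) <= t ^+ 2 * (T * X) by rewrite mulrA -expr2 ler_wpM2l.
apply: le_trans (_ : 2 * (s ^+ 2 * (T * Y)) + 2 * (t ^+ 2 * (T * X)) <= _); first lra.
rewrite -subr_ge0.
have -> : 4 * T * (X + s ^+ 2) * (Y + t ^+ 2) - (2 * (s ^+ 2 * (T * Y)) + 2 * (t ^+ 2 * (T * X))) =
  4 * (T * X * Y) + 2 * (T * (s ^+ 2) * Y) + 2 * (T * (t ^+ 2) * X) + 4 * (T * s ^+ 2 * t ^+ 2) by ring.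
have p1 := mulr_ge0 (mulr_ge0 hT hx) hy; have p2 := mulr_ge0 (mulr_ge0 hT hs) hy.
have p3 := mulr_ge0 (mulr_ge0 hT ht) hx; have p4 := mulr_ge0 (mulr_ge0 hT hs) ht.
lra.
Qed.

Lemma sc00 {R : realType} (s : R) : (s%:M : 'M[R]_1) 0 0 = s.
Proof. by rewrite mxE eqxx mulr1n. Qed.

Lemma vdotT {R : realType} n (C : 'M[R]_n) p q : vdot (C^T *m p) q = vdot (C *m q) p.
Proof.
rewrite /vdot trmx_mul trmxK.
by rewrite -[((C *m q)^T *m p)]trmxK trmx_mul trmxK [in RHS]mxE mulmxA.
Qed.

Lemma lc_solv {R : realType} n (C : 'M[R]_n) (x y : 'cV[R]_n) (s t : R) :
  lc_conn (solv_bracket C) (col_mx x s%:M) (col_mx y t%:M) =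
  col_mx (2^-1 *: (s *: ((C - C^T) *m y) - t *: ((C + C^T) *m x)))
         (2^-1 * vdot ((C + C^T) *m x) y)%:M.
Proof.
apply: vdot_eq => w; rewrite (koszul (solv_good C)).
rewrite -(vsubmxK w) (mx11_scalar (dsubmx w)); set z := usubmx w; set r := dsubmx w 0 0.
rewrite /solv_bracket !col_mxKu !col_mxKd !sc00 !vdot_col !vdot0l !addr0 vdot11.
rewrite !vdotBl !vdotZl !mulmxDl !vdotBl !vdotZl !vdotDl1 ?mulNmx ?vdotNl !vdotT; ring.
Qed.

Definition ui {R : realType} n (i : 'I_n) : 'cV[R]_(n + 1) := col_mx (delta_mx i 0) (0 : R)%:M.
Definition Yv {R : realType} n : 'cV[R]_(n + 1) := col_mx 0 (1 : R)%:M.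

Lemma z1 {R : realType} : (0 : 'cV[R]_1) = (0 : R)%:M.
Proof. by apply/matrixP => i j; rewrite !mxE mul0rn. Qed.

Lemma num_i {R : realType} n (C : 'M[R]_n) (i : 'I_n) :
  let e := (delta_mx i 0 : 'cV[R]_n) in
  vdot (curv (solv_bracket C) (ui i) (Yv n) (Yv n)) (ui i) =
  - 4^-1 * vdot ((C + C^T) *m e) ((C - C^T) *m e)
  - 2^-1 * vdot ((C + C^T) *m (C *m e)) e.
Proof.
move=> e; rewrite (num_formula (solv_good C)) /ui /Yv -/e.
have -> : solv_bracket C (col_mx e 0%:M) (col_mx 0 1%:M) = col_mx (- (C *m e)) 0%:M.
  rewrite /solv_bracket !col_mxKu !col_mxKd !sc00 -z1 mulmx0 !scale0r scale1r sub0r //.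
rewrite !lc_solv !mulmx0 !scaler0 !scale0r !vdot0r !vdot0l ?subr0 ?sub0r !scale1r.
rewrite !vdot_col !vdot11 ?vdot0l ?vdot0r ?mulr0 ?mul0r.
rewrite !scaler0 vdot0l !vdotZl !vdotZr !mulmxN !vdotNl.
have -> : (4 : R)^-1 = 2^-1 * 2^-1 by field.
ring.
Qed.

Lemma vdot_ee {R : realType} n (M N : 'M[R]_n) i :
  vdot (M *m delta_mx i 0) (N *m delta_mx i 0) = (M^T *m N) i i.
Proof.
rewrite -!colE vdotE mxE; apply: eq_bigr => k _; by rewrite !mxE.
Qed.

Lemma vdot_e {R : realType} n (M : 'M[R]_n) i :
  vdot (M *m delta_mx i 0) (delta_mx i 0) = M i i.
Proof. by rewrite vdot_delta -colE mxE. Qed.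

Lemma sum_num {R : realType} n (C : 'M[R]_n) :
  \sum_i vdot (curv (solv_bracket C) (ui i) (Yv n) (Yv n)) (ui i) =
  - 2^-1 * (\tr (C *m C) + \tr (C *m C^T)).
Proof.
under eq_bigr => i _ do rewrite num_i vdot_ee mulmxA vdot_e.
rewrite big_split /= -!mulr_sumr -!/(mxtrace _).
rewrite !linearD /= trmxK sumrN -mulr_sumr -/(mxtrace _) !mulmxDl !mulmxN !mxtraceD !raddfN /= -trmx_mul mxtrace_tr (mxtrace_mulC C^T C); ring.
Qed.

Lemma rank_on {R : realType} m (u v : 'cV[R]_m) :
  vdot u u = 1 -> vdot v v = 1 -> vdot u v = 0 -> \rank (row_mx u v) = 2%N.
Proof.
move=> hu hv huv.
have e : (row_mx u v)^T *m row_mx u v = 1%:M.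
  rewrite tr_row_mx mul_col_row [u^T *m u]mx11_scalar [u^T *m v]mx11_scalar.
  rewrite [v^T *m u]mx11_scalar [v^T *m v]mx11_scalar.
  rewrite -/(vdot u u) -/(vdot u v) -/(vdot v u) -/(vdot v v) (vdotC v u) hu hv huv -z1.
  by rewrite -scalar_mx_block.
apply/eqP; rewrite eqn_leq rank_leq_col /=.
by have := mxrankM_maxr (row_mx u v)^T (row_mx u v); rewrite e mxrank1.
Qed.

Unset Implicit Arguments.
Theorem mainTheorem8 (R : realType) (n : nat) (hn : (2 <= n)%N) :
  exists tau : R, 0 < tau /\
  forall (A : 'M[int]_n) (B : 'M[R]_n),
    \det A = 1 ->
    expmx_is B (map_mx (fun z : int => z%:~R) A) ->
    exists kappa : R,
    forall (P C : 'M[R]_n),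
      P \in unitmx ->
      B *m P = P *m C ->
      let a := sup_abs_sec (@solv_bracket R n C) in
      tau^-1 * a <= \tr (C *m C^T) /\ \tr (C *m C^T) <= tau * a + kappa.
Proof.
set tau : R := 12 * (1 + 2 * (n + 1)%:R).
have taup : 0 < tau by rewrite /tau mulr_gt0 // ltr_pwDl // mulr_ge0.
exists tau; split => // A B _ _; exists (- \tr (B *m B)) => P C hP hBC a.
set T := \tr (C *m C^T).
have hT : 0 <= T.
  by rewrite /T /mxtrace; apply: sumr_ge0 => i _; rewrite mxE; apply: sumr_ge0 => j _;
     rewrite mxE -expr2 sqr_ge0.
have hb := solv_good C.
have sb : forall u v, `|sec_curv (solv_bracket C) u v| <= tau * T.
  move=> u v; apply: le_eq_r (sec_bound hb (beta := 4 * T) _ (solv_bound C) u v) _.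
    by rewrite mulr_ge0.
  rewrite /tau; ring.
set E := [set x : R | exists u v : 'cV[R]_(n + 1),
         \rank (row_mx u v) = 2%N /\ x = `|sec_curv (solv_bracket C) u v|]%classic.
have ub : ubound E (tau * T) by move=> x [u [v [_ ->]]]; exact: sb.
have nui : forall i : 'I_n, vdot (ui i) (ui i) = 1 :> R.
  by move=> i; rewrite /ui vdot_col vdot_dd vdot11 mulr0 addr0.
have nY : vdot (Yv n) (Yv n) = 1 :> R.
  by rewrite /Yv vdot_col vdot0l vdot11 mulr1 add0r.
have nuY : forall i : 'I_n, vdot (ui i) (Yv n) = 0 :> R.
  by move=> i; rewrite /ui /Yv vdot_col vdot0r vdot11 mul0r addr0.
have mem : forall i : 'I_n, E `|sec_curv (solv_bracket C) (ui i) (Yv n)|.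
  by move=> i; exists (ui i), (Yv n); split => //; apply: rank_on.
have n0 : (0 < n)%N by apply: leq_trans hn.
have ne : (E !=set0)%classic by exists `|sec_curv (solv_bracket C) (ui (Ordinal n0)) (Yv n)|.
have hs : has_sup E by split => //; exists (tau * T).
have aub : a <= tau * T by apply: ge_sup.
have ai : forall i : 'I_n, `|sec_curv (solv_bracket C) (ui i) (Yv n)| <= a.
  by move=> i; apply: sup_upper_bound => //; exact: mem.
have a0 : 0 <= a by apply: le_trans (ai (Ordinal n0)).
have seci : forall i : 'I_n, sec_curv (solv_bracket C) (ui i) (Yv n) =
    vdot (curv (solv_bracket C) (ui i) (Yv n) (Yv n)) (ui i).
  by move=> i; rewrite /sec_curv nui nY nuY expr0n /= mulr1 subr0 invr1 mulr1.
have hsum : 2^-1 * (\tr (C *m C) + T) <= n%:R * a.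
  have := sum_num C; move=> es.
  have : - \sum_(i < n) vdot (curv (solv_bracket C) (ui i) (Yv n) (Yv n)) (ui i) <= n%:R * a.
    rewrite -sumrN; apply: le_trans (_ : \sum_(i < n) a <= _); last first.
      by rewrite sumr_const card_ord mulr_natl.
    apply: ler_sum => i _; rewrite -seci; apply: le_trans (ai i).
    by rewrite -normrN ler_norm.
  by rewrite es mulNr opprK.
have eC : C = invmx P *m B *m P.
  by rewrite -mulmxA hBC mulmxA mulVmx // mul1mx.
have etr : \tr (C *m C) = \tr (B *m B).
  rewrite eC -!mulmxA (mulmxA P (invmx P)) mulmxV // mul1mx.
  by rewrite mxtrace_mulC -mulmxA -mulmxA mulmxV // mulmx1.
rewrite etr in hsum.
split.
  by rewrite ler_pdivrMl.
have h2 : 2 * n%:R * a <= tau * a.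
  apply: ler_wpM2r => //; rewrite /tau.
  rewrite natrD; have hn0 : (0 : R) <= n%:R by [].
  lra.
lra.
Qed.
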